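(* Let $n$ be a prime and $k$ an integer with $2\le k<n/2$, and let $N=\binom{n}{k}/n$. Regard each $\underline{\mathbf{C}}_{\underline{g}}$ as the set of $k$-subsets of $[n]$ formed by the underlying sets of its vectors. Then the family $\{\underline{\mathbf{C}}_{\underline{g}}:\underline{g}\in\underline{\mathbf{G}}_{\mathrm{tot}}\}$ has exactly $N$ distinct members; any two of them are either equal or disjoint; and their union is the set $\binom{[n]}{k}$ of all $k$-subsets of $[n]$. Consequently, choosing generators $\underline{g}_1,\dots,\underline{g}_N\in\underline{\mathbf{G}}_{\mathrm{tot}}$ with pairwise distinct sets $\underline{\mathbf{C}}_{\underline{g}_i}$, the corresponding cycles $\boldsymbol{\mathcal{S}}_{\underline{g}_1},\dots,\boldsymbol{\mathcal{S}}_{\underline{g}_N}$ are Hamiltonian (Berge) cycles of $K_n^k$ whose hyperedge sets partition $\binom{[n]}{k}$, i.e. they form a Hamiltonian decomposition of $K_n^k$.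
   Context: $[n]=\{1,\dots,n\}$; reduction mod $n$ is entrywise with representatives in $[n]$, and $\underline{1}$ is the all-ones vector of length $k$. For an integer vector $\underline{g}=[g_1,\dots,g_k]$ with $g_i\ge1$ for $i\in[k-1]$ and $g_1+\dots+g_{k-1}\le n-1$, the representative vector is $\underline{r}_{\underline{g}}=[1,1+g_1,1+g_1+g_2,\dots,1+g_1+\cdots+g_{k-1}]$ and $\underline{\mathbf{C}}_{\underline{g}}=\{\underline{r}_{\underline{g}}+p\cdot\underline{1}\ (\mathrm{mod}\ n):p=0,\dots,n-1\}$. The generator set: let $\sigma_{\min}=k-1$ and $\sigma_{\max}=n-\lceil n/k\rceil$. For $\sigma\in[\sigma_{\min},\sigma_{\max}]$ let $\underline{\mathbf{S}}_\sigma=\{[c_1,\dots,c_{k-1}]\in\mathbb{Z}^{k-1}:\sum_i c_i=\sigma,\ 1\le c_i\le n-\sigma\}$ and $\underline{\mathbf{G}}_\sigma=\{[c_1,\dots,c_{k-1},m]:[c_1,\dots,c_{k-1}]\in\underline{\mathbf{S}}_\sigma\}$ where $m=-\sigma$ if $\sigma\le\lfloor n/2\rfloor$ and $m=n-\sigma$ otherwise. Finally $\underline{\mathbf{G}}_{\mathrm{tot}}=\bigcup_{\sigma=\sigma_{\min}}^{\sigma_{\max}}\underline{\mathbf{G}}_\sigma$. For $\underline{g}\in\underline{\mathbf{G}}_{\mathrm{tot}}$, the cycle $\boldsymbol{\mathcal{S}}_{\underline{g}}$ is $(v_0,\mathcal{E}_0,v_1,\mathcal{E}_1,\dots,v_{n-1},\mathcal{E}_{n-1},v_0)$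 with $v_p=1+p\,g_1\pmod n$ and $\mathcal{E}_p$ the set of entries of $\underline{r}_{\underline{g}}+p\,g_1\cdot\underline{1}\pmod n$. The complete $k$-uniform hypergraph $K_n^k$ has vertex set $[n]$ and every $k$-subset of $[n]$ as a hyperedge. A (Berge) Hamiltonian cycle is a sequence $(v_1,\mathcal{E}_1,v_2,\dots,v_n,\mathcal{E}_n,v_1)$ with $v_1,\dots,v_n$ a permutation of $[n]$, $\mathcal{E}_1,\dots,\mathcal{E}_n$ distinct hyperedges, and $v_i,v_{i+1}\in\mathcal{E}_i$ (indices mod $n$). A Hamiltonian decomposition of $K_n^k$ is a partition of its hyperedge set into $N$ sets each of which is the hyperedge set of a Hamiltonian cycle. *)

(* Defs.v *)
From HB Require Import structures.
From mathcomp Require Import all_boot all_order all_algebra.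
Unset Printing Implicit Defensive.
Import Order.TTheory GRing.Theory Num.Theory.

(* Vertices [n] = {1,...,n} are the nonzero elements of 'I_n.+1. *)

(* reduction mod n with representative in [n] *)
Definition red (n : nat) (x : int) : nat := (absz (modz (x - 1)%R (Posz n))).+1.

Definition rep (g : seq int) : seq int :=
  mkseq (fun i => (1 + \sum_(j < i) g`_j)%R) (size g).

Definition shiftv (n : nat) (v : seq int) (t : int) : seq nat :=
  [seq red n (x + t)%R | x <- v].

Definition toset (n : nat) (s : seq nat) : {set 'I_n.+1} :=
  [set i : 'I_n.+1 | nat_of_ord i \in s].

Definition Cset (n : nat) (g : seq int) : {set {set 'I_n.+1}} :=
  [set toset n (shiftv n (rep g) (Posz p)) | p : 'I_n].

Definition inGtot (n k : nat) (g : seq int) : Prop :=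
  exists sigma : nat,
    [/\ k.-1 <= sigma, sigma <= n - (n + k.-1) %/ k &
      exists c : seq nat,
        [/\ size c = k.-1, sumn c = sigma,
            all (fun x => (0 < x) && (x <= n - sigma)) c &
            g = rcons [seq (Posz x) | x <- c]
                  (if sigma <= n %/ 2 then (- Posz sigma)%R else Posz (n - sigma)%N)]].

Definition hyperedge (n k : nat) (E : {set 'I_n.+1}) : bool :=
  (#|E| == k) && [forall i in E, 0 < nat_of_ord i].

Definition hyperedges (n k : nat) : {set {set 'I_n.+1}} := [set E | hyperedge n k E].

(* Berge Hamiltonian cycle (v_0, E_0, v_1, ..., v_{n-1}, E_{n-1}, v_0) of K_n^k *)
Definition ham_cycle (n k : nat) (vs : seq 'I_n.+1) (Es : seq {set 'I_n.+1}) : Prop :=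
  [/\ size vs = n, uniq vs & all (fun v : 'I_n.+1 => 0 < nat_of_ord v) vs] /\
  [/\ size Es = n, uniq Es, all (hyperedge n k) Es &
      forall i, i < n ->
        (nth ord0 vs i \in nth set0 Es i) /\ (nth ord0 vs ((i + 1) %% n) \in nth set0 Es i)].

Definition cyc_vs (n : nat) (g : seq int) : seq 'I_n.+1 :=
  [seq (inord (red n (1 + (Posz p) * head 0 g)%R) : 'I_n.+1) | p <- iota 0 n].

Definition cyc_Es (n : nat) (g : seq int) : seq {set 'I_n.+1} :=
  [seq toset n (shiftv n (rep g) ((Posz p) * head 0 g)%R) | p <- iota 0 n].

(* Main.v *)
Require Import Defs.
From mathcomp Require Import all_boot all_order all_algebra.
From mathcomp Require Import zify.
From Stdlib Require Import Lia.
Import GRing.Theory Num.Theory.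

Set Implicit Arguments.
Unset Strict Implicit.

Definition rv (n m : nat) : nat := ((m + n.-1) %% n).+1.

Lemma rv_le n m : 0 < n -> rv n m <= n.
Proof. by move=> n0; rewrite /rv ltn_pmod. Qed.

Lemma rv_gt0 n m : 0 < rv n m.
Proof. by []. Qed.

Lemma rvK n m : 0 < n -> rv n m = m %[mod n].
Proof.
move=> n0; rewrite /rv -addn1 modnDml -addnA addn1 prednK //.
by rewrite modnDr.
Qed.

Lemma rv_eq n a b : a = b %[mod n] -> rv n a = rv n b.
Proof. by move=> h; rewrite /rv -modnDml h modnDml. Qed.

Lemma rv_id n m : 0 < m <= n -> rv n m = m.
Proof.
case/andP=> m0 mn; rewrite /rv.
have -> : m + n.-1 = m.-1 + n by lia.
rewrite modnDr modn_small; lia.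
Qed.

Lemma mod_eq_small n a b : 0 < a <= n -> 0 < b <= n -> a = b %[mod n] -> a = b.
Proof.
move=> ha hb; wlog le_ab : a b ha hb / a <= b.
  move=> W; case: (leqP a b) => h; first exact: W.
  by move=> e; symmetry; apply: W => //; apply: ltnW.
move/eqP; rewrite eq_sym eqn_mod_dvd // => /dvdn_leq h.
case: (posnP (b - a)) => e; first lia.
have := h e; lia.
Qed.

Lemma rv_inj n a b : 0 < n -> rv n a = rv n b -> a = b %[mod n].
Proof. by move=> n0 e; rewrite -(rvK a n0) -(rvK b n0) e. Qed.

Definition nz {n} (E : {set 'I_n.+1}) := [forall i in E, 0 < nat_of_ord i].

Definition Rot n (t : nat) (E : {set 'I_n.+1}) : {set 'I_n.+1} :=
  [set (inord (rv n (nat_of_ord i + t)) : 'I_n.+1) | i in E].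
Arguments Rot : clear implicits.

Lemma val_inord_rv n m : 0 < n -> nat_of_ord (inord (rv n m) : 'I_n.+1) = rv n m.
Proof. by move=> n0; rewrite inordK // ltnS rv_le. Qed.

Lemma nzP n (E : {set 'I_n.+1}) : reflect (forall i, i \in E -> 0 < nat_of_ord i) (nz E).
Proof. exact: forall_inP. Qed.

Lemma Rot_comp n s t E : 0 < n -> Rot n s (Rot n t E) = Rot n (t + s) E.
Proof.
move=> n0; rewrite /Rot -imset_comp; apply: eq_imset => i /=.
congr inord; rewrite val_inord_rv //; apply: rv_eq.
by rewrite addnA -modnDml rvK // modnDml.
Qed.

Lemma Rot_mod n a b E : a = b %[mod n] -> Rot n a E = Rot n b E.
Proof.
move=> h; apply: eq_imset => i; congr inord; apply: rv_eq.
by rewrite -modnDmr h modnDmr.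
Qed.

Lemma Rot0 n E : nz E -> Rot n 0 E = E.
Proof.
move/nzP=> h; rewrite /Rot -[RHS]imset_id; apply: eq_in_imset => i /h i0.
apply: val_inj; rewrite /= addn0 rv_id ?inordK //.
by rewrite i0 -ltnS ltn_ord.
Qed.

Lemma Rot_nz n t E : 0 < n -> nz (Rot n t E).
Proof.
move=> n0; apply/nzP => j /imsetP [i _ ->]; by rewrite val_inord_rv.
Qed.

Lemma Rot_card n t E : 0 < n -> nz E -> #|Rot n t E| = #|E|.
Proof.
move=> n0 /nzP h; apply: card_in_imset => i j /h hi /h hj e.
have e' := congr1 (@nat_of_ord _) e; rewrite !val_inord_rv // in e'.
move/(rv_inj n0)/eqP: e'; rewrite eqn_modDr => /eqP e2.
apply: val_inj; apply: (@mod_eq_small n) => //.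
- by rewrite hi -ltnS ltn_ord.
- by rewrite hj -ltnS ltn_ord.
Qed.

Lemma Rot_n n E : 0 < n -> nz E -> Rot n n E = E.
Proof. by move=> n0 h; rewrite (@Rot_mod n n 0) ?modnn ?mod0n // Rot0. Qed.

Lemma sum_Rot n t E : 0 < n -> nz E ->
  \sum_(i in Rot n t E) nat_of_ord i = \sum_(i in E) nat_of_ord i + #|E| * t %[mod n].
Proof.
move=> n0 /nzP h; rewrite /Rot big_imset /=; last first.
  move=> i j /h hi /h hj e.
  have e' := congr1 (@nat_of_ord _) e; rewrite !val_inord_rv // in e'.
  move/(rv_inj n0)/eqP: e'; rewrite eqn_modDr => /eqP e2.
  apply: val_inj; apply: (@mod_eq_small n) => //.
  - by rewrite hi -ltnS ltn_ord.
  - by rewrite hj -ltnS ltn_ord.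
rewrite -modn_summ.
under eq_bigr => i _ do rewrite val_inord_rv // rvK //.
rewrite modn_summ big_split /= sum_nat_const.
by [].
Qed.

Lemma Rot_stab n t E : prime n -> nz E -> 0 < #|E| < n -> Rot n t E = E -> n %| t.
Proof.
move=> pn h /andP [c0 cn] e; have n0 := prime_gt0 pn.
have := sum_Rot t n0 h; rewrite e -{1}[\sum_(i in E) _]addn0 => /eqP.
rewrite eqn_modDl mod0n eq_sym => h'.
have : n %| #|E| * t by exact: h'.
rewrite Euclid_dvdM // => /orP [] //.
by move/dvdn_leq => /(_ c0); rewrite leqNgt cn.
Qed.

Lemma Rot_eq_mod n a b E : prime n -> nz E -> 0 < #|E| < n ->
  Rot n a E = Rot n b E -> a = b %[mod n].
Proof.
move=> pn h hc e; have n0 := prime_gt0 pn.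
have : Rot n (b * n.-1) (Rot n a E) = Rot n (b * n.-1) (Rot n b E) by rewrite e.
rewrite !Rot_comp // (@Rot_mod n (b + b * n.-1) 0); last first.
  by rewrite -{1}(muln1 b) -mulnDr add1n prednK // modnMl mod0n.
rewrite Rot0 // => e2.
have /dvdnP [q hq] := Rot_stab pn h hc e2.
apply/eqP; rewrite -(eqn_modDr (b * n.-1)) hq modnMl.
by rewrite -{1}(muln1 b) -mulnDr add1n prednK // modnMl.
Qed.

Definition Orb n (E : {set 'I_n.+1}) : {set {set 'I_n.+1}} :=
  [set Rot n (nat_of_ord p) E | p : 'I_n].
Arguments Orb : clear implicits.

Lemma Orb_Rot n t E : 0 < n -> Rot n t E \in Orb n E.
Proof.
move=> n0; apply/imsetP; exists (Ordinal (ltn_pmod t n0)) => //=.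
by apply: Rot_mod; rewrite modn_mod.
Qed.

Lemma Orb_self n E : 0 < n -> nz E -> E \in Orb n E.
Proof. by move=> n0 h; rewrite -{1}(Rot0 h) Orb_Rot. Qed.

Lemma Orb_eq n E F : 0 < n -> nz E -> F \in Orb n E -> Orb n F = Orb n E.
Proof.
move=> n0 h /imsetP [q _ ->]; apply/setP => X; apply/idP/idP.
- case/imsetP=> p _ ->; rewrite Rot_comp //; exact: Orb_Rot.
- case/imsetP=> p _ ->.
  rewrite (@Rot_mod n p (q + (p + n - q))); last first.
    have -> : q + (p + n - q) = p + n by have := ltn_ord q; lia.
    by rewrite modnDr.
  rewrite -Rot_comp //; exact: Orb_Rot.
Qed.

Lemma Orb_disj n E F : 0 < n -> nz E -> nz F ->
  Orb n E = Orb n F \/ [disjoint Orb n E & Orb n F].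
Proof.
move=> n0 hE hF; case: (boolP [disjoint Orb n E & Orb n F]) => d; first by right.
left; have /set0Pn [X /setIP [h1 h2]] : Orb n E :&: Orb n F != set0 by rewrite setI_eq0.
by rewrite -(Orb_eq n0 hE h1) (Orb_eq n0 hF h2).
Qed.

Lemma Orb_card n E : prime n -> nz E -> 0 < #|E| < n -> #|Orb n E| = n.
Proof.
move=> pn h hc; rewrite card_imset ?card_ord // => p q /(Rot_eq_mod pn h hc).
by rewrite !modn_small // => /val_inj.
Qed.

Lemma Orb_mem n E X : 0 < n -> X \in Orb n E -> exists t, X = Rot n t E.
Proof. by move=> n0 /imsetP [p _ ->]; exists p. Qed.

Lemma Orb_prop n E X : 0 < n -> nz E -> X \in Orb n E -> nz X /\ #|X| = #|E|.
Proof. by move=> n0 h /imsetP [p _ ->]; rewrite Rot_nz // Rot_card. Qed.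

Lemma redP n m : 0 < n -> red n (Posz m) = rv n m.
Proof.
move=> n0; rewrite /red /rv.
have -> : (Posz m - 1 = (-1) * Posz n + Posz (m + n.-1))%R.
  rewrite PoszD; have -> : Posz n.-1 = (Posz n - 1)%R by rewrite -subn1 subzn.
  rewrite mulN1r; lia.
by rewrite modzMDl modz_nat.
Qed.

Definition Pk (k : nat) (c : seq nat) : seq nat := mkseq (fun i => 1 + sumn (take i c)) k.

Lemma sum_take_int c m i : i <= size c ->
  (\sum_(j < i) (rcons [seq Posz x | x <- c] m)`_j)%R = Posz (sumn (take i c)).
Proof.
elim: i => [|i IH] hi; first by rewrite big_ord0 take0.
rewrite big_ord_recr /= IH ?(ltnW hi) // (take_nth 0 hi) sumn_rcons PoszD.
by rewrite nth_rcons size_map hi (nth_map 0).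
Qed.

Lemma rep_conv c m k : size c = k.-1 -> 0 < k ->
  rep (rcons [seq Posz x | x <- c] m) = [seq Posz x | x <- Pk k c].
Proof.
move=> sc k0; apply: (@eq_from_nth _ 0%R).
  by rewrite /rep /Pk /mkseq !size_map !size_iota size_rcons size_map sc prednK.
rewrite /rep size_mkseq size_rcons size_map => i hi.
have hk : i < k by rewrite -(prednK k0) -sc.
rewrite nth_mkseq // (nth_map 0) /Pk ?size_mkseq // nth_mkseq //.
by rewrite sum_take_int // sc -ltnS prednK.
Qed.

Lemma shiftv_nat n s t : 0 < n ->
  shiftv n [seq Posz x | x <- s] (Posz t) = [seq rv n (x + t) | x <- s].
Proof.
move=> n0; rewrite /shiftv -map_comp; apply: eq_map => x /=.
by rewrite -PoszD redP.
Qed.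

Lemma toset_shift n s t : 0 < n -> all (fun x => x <= n) s ->
  toset n (shiftv n [seq Posz x | x <- s] (Posz t)) = Rot n t (toset n s).
Proof.
move=> n0 /allP hs; rewrite shiftv_nat //; apply/setP => i.
rewrite inE; apply/mapP/imsetP.
- case=> x xs e; exists (inord x : 'I_n.+1).
    by rewrite inE inordK // ltnS hs.
  by apply: val_inj; rewrite /= val_inord_rv // inordK // ltnS hs.
- case=> j; rewrite inE => js ->; exists (nat_of_ord j) => //.
  by rewrite val_inord_rv.
Qed.

Lemma card_toset n s : uniq s -> all (fun x => x <= n) s -> #|toset n s| = size s.
Proof.
move=> us /allP hs.
have -> : toset n s = [set i in [seq (inord x : 'I_n.+1) | x <- s]].
  apply/setP => i; rewrite !inE; apply/idP/mapP.
  - by move=> h; exists (nat_of_ord i) => //; rewrite inord_val.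
  - by case=> x xs ->; rewrite inordK // ltnS hs.
rewrite cardsE; have /card_uniqP -> : uniq [seq (inord x : 'I_n.+1) | x <- s].
  rewrite map_inj_in_uniq // => x y xs ys e.
  by rewrite -(@inordK n x) ?ltnS ?hs // e inordK // ltnS hs.
by rewrite size_map.
Qed.

Lemma sumn_take_le c i : sumn (take i c) <= sumn c.
Proof. by rewrite -{2}(cat_take_drop i c) sumn_cat leq_addr. Qed.

Lemma sumn_take_lt c i j : all (fun x => 0 < x) c -> i < j -> j <= size c ->
  sumn (take i c) < sumn (take j c).
Proof.
move=> /allP hc; elim: j => [//|j IH] hij hj.
rewrite (take_nth 0 hj) sumn_rcons.
have cj : 0 < nth 0 c j by apply: hc; rewrite mem_nth.
case: (ltngtP i j) => [lt|gt|eq]; [have := IH lt (ltnW hj); lia | lia | rewrite eq; lia].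
Qed.

Lemma Pk_size k c : size (Pk k c) = k.
Proof. by rewrite size_mkseq. Qed.

Lemma Pk_uniq k c : size c = k.-1 -> all (fun x => 0 < x) c -> uniq (Pk k c).
Proof.
move=> sc hc; apply/mkseq_uniqP => i j; rewrite !inE => hi hj /eqP.
rewrite eqn_add2l => /eqP e.
have hi' : i <= size c by rewrite sc -ltnS; case: k hi {sc hj}.
have hj' : j <= size c by rewrite sc -ltnS; case: k hj {sc hi hi'}.
case: (ltngtP i j) => // h.
- by have := sumn_take_lt hc h hj'; rewrite e ltnn.
- by have := sumn_take_lt hc h hi'; rewrite e ltnn.
Qed.

Lemma Pk_bound k c n : sumn c < n -> all (fun x => x <= n) (Pk k c).
Proof.
move=> hs; apply/allP => x /mapP [i _ ->].
by have := sumn_take_le c i; lia.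
Qed.

Lemma Pk_pos k c : all (fun x => 0 < x) (Pk k c).
Proof. by apply/allP => x /mapP [i _ ->]. Qed.

Lemma toset_nz n s : all (fun x => 0 < x) s -> nz (toset n s).
Proof. by move/allP => h; apply/nzP => i; rewrite inE => /h. Qed.

Lemma Gtot_inv n k g : 0 < n -> 0 < k -> inGtot n k g ->
  exists c m, [/\ g = rcons [seq Posz x | x <- c] m, size c = k.-1,
                  all (fun x => 0 < x) c & sumn c < n].
Proof.
move=> n0 k0 [sig [h1 h2 [c [sc sumc hc ->]]]].
exists c; eexists; split; [reflexivity | exact: sc | | ].
- by apply/allP => x /(allP hc) /andP [].
- have : 1 <= (n + k.-1) %/ k.
    have : k %/ k <= (n + k.-1) %/ k by apply: leq_div2r; lia.
    by rewrite divnn k0.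
  lia.
Qed.

Lemma Cset_Orb n k c m : 0 < n -> 0 < k -> size c = k.-1 -> sumn c < n ->
  Cset n (rcons [seq Posz x | x <- c] m) = Orb n (toset n (Pk k c)).
Proof.
move=> n0 k0 sc hs; rewrite /Cset /Orb (@rep_conv c m k) //; apply: eq_imset => p.
by rewrite toset_shift // Pk_bound.
Qed.

Lemma Bset_hyper n k c : 0 < n -> size c = k.-1 -> all (fun x => 0 < x) c -> sumn c < n ->
  hyperedge n k (toset n (Pk k c)).
Proof.
move=> n0 sc hc hs; rewrite /hyperedge card_toset ?Pk_size ?eqxx ?Pk_uniq ?Pk_bound //=.
exact: (toset_nz n (Pk_pos k c)).
Qed.

Lemma cyc_Es_eq n k c0 c m : 0 < n -> 0 < k -> size (c0 :: c) = k.-1 -> sumn (c0 :: c) < n ->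
  cyc_Es n (rcons [seq Posz x | x <- c0 :: c] m) =
  [seq Rot n (p * c0) (toset n (Pk k (c0 :: c))) | p <- iota 0 n].
Proof.
move=> n0 k0 sc hs; rewrite /cyc_Es (@rep_conv (c0 :: c) m k) //; apply: eq_map => p /=.
by rewrite -PoszM toset_shift // Pk_bound.
Qed.

Lemma cyc_vs_eq n c0 c m : 0 < n ->
  cyc_vs n (rcons [seq Posz x | x <- c0 :: c] m) =
  [seq (inord (rv n (1 + p * c0)) : 'I_n.+1) | p <- iota 0 n].
Proof.
move=> n0; rewrite /cyc_vs; apply: eq_map => p /=.
by rewrite -PoszM -PoszD redP.
Qed.

Lemma mul_cancel n c0 p q : prime n -> 0 < c0 < n -> p < n -> q < n ->
  p * c0 = q * c0 %[mod n] -> p = q.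
Proof.
move=> pn /andP [c00 c0n]; wlog le_qp : p q / q <= p.
  move=> W hp hq e; case: (leqP q p) => h; first exact: W.
  by symmetry; apply: W => //; apply: ltnW.
move=> hp hq /eqP; rewrite eqn_mod_dvd ?leq_mul2r ?le_qp ?orbT //.
rewrite -mulnBl Euclid_dvdM // => /orP [] h.
- case: (posnP (p - q)) => e; first lia.
  have := dvdn_leq e h; lia.
- have := dvdn_leq c00 h; lia.
Qed.

Lemma Rot_mem n s x t : 0 < n -> x \in s -> x <= n ->
  (inord (rv n (x + t)) : 'I_n.+1) \in Rot n t (toset n s).
Proof.
move=> n0 xs xn; have -> : x = nat_of_ord (inord x : 'I_n.+1) by rewrite inordK.
by apply: imset_f; rewrite inE inordK.
Qed.

Lemma sumn_ge_size c : all (fun x => 0 < x) c -> size c <= sumn c.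
Proof. by elim: c => //= x c IH /andP [x0 /IH]; lia. Qed.

Lemma ham_ok n k c0 c m : prime n -> 2 <= k -> k < n -> size (c0 :: c) = k.-1 ->
  all (fun x => 0 < x) (c0 :: c) -> sumn (c0 :: c) < n ->
  ham_cycle n k (cyc_vs n (rcons [seq Posz x | x <- c0 :: c] m))
                (cyc_Es n (rcons [seq Posz x | x <- c0 :: c] m)).
Proof.
move=> pn k2 kn sc hc hs; have n0 := prime_gt0 pn; have k0 : 0 < k by lia.
rewrite (@cyc_vs_eq n c0 c m n0) (@cyc_Es_eq n k c0 c m n0 k0 sc hs).
set B := toset n (Pk k (c0 :: c)).
have hB := Bset_hyper n0 sc hc hs; move: (hB); rewrite /hyperedge => /andP [/eqP cB nB].
have hcB : 0 < #|B| < n by rewrite cB k0.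
have c0p : 0 < c0 by case/andP: hc.
have c0n : c0 < n by move: hs => /=; lia.
have m1 : 1 \in Pk k (c0 :: c).
  by have := @mem_nth _ 0 (Pk k (c0 :: c)) 0; rewrite Pk_size nth_mkseq // => ->.
have m2 : 1 + c0 \in Pk k (c0 :: c).
  have := @mem_nth _ 0 (Pk k (c0 :: c)) 1; rewrite Pk_size nth_mkseq // => h.
  by move: (h k2) => /=; rewrite take0 /= addn0.
have le1 : 1 + c0 <= n by move: hs => /=; lia.
split; split.
- by rewrite size_map size_iota.
- rewrite map_inj_in_uniq ?iota_uniq // => p q; rewrite !mem_iota /= => hp hq e.
  have e' := congr1 (@nat_of_ord _) e; rewrite !val_inord_rv // in e'.
  move/(rv_inj n0)/eqP: e'; rewrite eqn_modDl => /eqP.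
  by apply: mul_cancel => //; rewrite ?c0p.
- by apply/allP => v /mapP [p _ ->]; rewrite val_inord_rv.
- by rewrite size_map size_iota.
- rewrite map_inj_in_uniq ?iota_uniq // => p q; rewrite !mem_iota /= => hp hq.
  move/(Rot_eq_mod pn nB hcB).
  by apply: mul_cancel => //; rewrite ?c0p.
- apply/allP => E /mapP [p _ ->]; rewrite /hyperedge Rot_card // cB eqxx /=.
  exact: Rot_nz.
- move=> i hi; rewrite !(nth_map 0) ?size_iota ?ltn_pmod // !nth_iota ?ltn_pmod //.
  rewrite !add0n; split; first exact: Rot_mem.
  rewrite (@rv_eq n (1 + (i + 1) %% n * c0) (1 + c0 + i * c0)); first exact: Rot_mem.
  by rewrite -modnDmr modnMml modnDmr; congr (_ %% _); lia.
Qed.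

Lemma Es_Cset n k c0 c m : prime n -> 2 <= k -> k < n -> size (c0 :: c) = k.-1 ->
  all (fun x => 0 < x) (c0 :: c) -> sumn (c0 :: c) < n ->
  [set E | E \in cyc_Es n (rcons [seq Posz x | x <- c0 :: c] m)] =
  Cset n (rcons [seq Posz x | x <- c0 :: c] m).
Proof.
move=> pn k2 kn sc hc hs; have n0 := prime_gt0 pn; have k0 : 0 < k by lia.
have [_ [sE uE _ _]] := ham_ok m pn k2 kn sc hc hs.
rewrite (@Cset_Orb n k (c0 :: c) m n0 k0 sc hs); apply/eqP; rewrite eqEcard; apply/andP; split.
- apply/subsetP => E; rewrite inE (@cyc_Es_eq n k c0 c m n0 k0 sc hs) => /mapP [p _ ->].
  exact: Orb_Rot.
- have hB := Bset_hyper n0 sc hc hs; move: (hB); rewrite /hyperedge => /andP [/eqP cB nB].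
  rewrite Orb_card // ?cB ?k0 //.
  have -> : #|[set E | E \in cyc_Es n (rcons [seq Posz x | x <- c0 :: c] m)]| = n.
    by rewrite cardsE; move/card_uniqP: uE => ->.
  by [].
Qed.

Lemma minrot n E : 0 < n -> nz E -> E != set0 ->
  exists F m, [/\ F \in Orb n E, (inord 1 : 'I_n.+1) \in F,
    (forall x, x \in F -> nat_of_ord x <= m) &
    forall t m', (inord 1 : 'I_n.+1) \in Rot n t F ->
      (forall x, x \in Rot n t F -> nat_of_ord x <= m') -> m <= m'].
Proof.
move=> n0 hE /set0Pn [x0 x0E].
pose P m := [exists t : 'I_n, ((inord 1 : 'I_n.+1) \in Rot n t E) &&
                              [forall x in Rot n t E, nat_of_ord x <= m]].
have exP : exists m, P m.
  exists n; apply/existsP; exists (Ordinal (ltn_pmod (n + 1 - x0) n0)).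
  apply/andP; split.
  - have hx0 : 0 < nat_of_ord x0 <= n.
      by apply/andP; split; [exact: (forall_inP hE) | rewrite -ltnS ltn_ord].
    have -> : (inord 1 : 'I_n.+1) = inord (rv n (x0 + (n + 1 - x0) %% n)).
      congr inord; rewrite (@rv_eq n _ 1) ?rv_id //.
      rewrite modnDmr.
      have -> : x0 + (n + 1 - x0) = 1 + n by move: hx0; clear; lia.
      by rewrite modnDr.
    exact: imset_f.
  - by apply/forall_inP => y /imsetP [z _ ->]; rewrite val_inord_rv // rv_le.
case: (ex_minnP exP) => m /existsP [t /andP [h1 /forall_inP h2]] hmin.
exists (Rot n t E), m; split => //.
- exact: imset_f.
- move=> t' m'; rewrite Rot_comp // (@Rot_mod n (t + t') ((t + t') %% n)) ?modn_mod //.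
  move=> g1 g2; apply: hmin; apply/existsP; exists (Ordinal (ltn_pmod (t + t') n0)).
  by rewrite /= g1 /=; apply/forall_inP.
Qed.

Definition sF n (F : {set 'I_n.+1}) : seq nat := [seq x <- iota 1 n | (inord x : 'I_n.+1) \in F].
Arguments sF : clear implicits.

Lemma sF_mem n F x : x \in sF n F = (0 < x <= n) && ((inord x : 'I_n.+1) \in F).
Proof.
by rewrite mem_filter mem_iota andbC; congr (_ && _); apply/idP/idP; lia.
Qed.

Lemma sF_toset n F : nz F -> F = toset n (sF n F).
Proof.
move/nzP=> h; apply/setP => i; rewrite inE sF_mem inord_val.
case: (boolP (i \in F)) => hi; last by rewrite andbF.
by rewrite andbT h //= -ltnS ltn_ord.
Qed.

Lemma sF_sorted n F : sorted ltn (sF n F).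
Proof. by apply: sorted_filter; [exact: ltn_trans | exact: iota_ltn_sorted]. Qed.

Lemma sF_uniq n F : uniq (sF n F).
Proof. by apply: filter_uniq; exact: iota_uniq. Qed.

Lemma sF_bound n F : all (fun x => x <= n) (sF n F).
Proof. by apply/allP => x; rewrite sF_mem => /andP [/andP [_ ->]]. Qed.

Lemma sF_pos n F : all (fun x => 0 < x) (sF n F).
Proof. by apply/allP => x; rewrite sF_mem => /andP [/andP [->]]. Qed.

Lemma sF_size n F : nz F -> size (sF n F) = #|F|.
Proof. by move=> h; rewrite {2}(sF_toset h) card_toset ?sF_uniq ?sF_bound. Qed.

Lemma sorted_le s p q : sorted ltn s -> p <= q -> q < size s -> nth 0 s p <= nth 0 s q.
Proof.
move=> ss; rewrite leq_eqVlt => /orP [/eqP -> //|pq] qs.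
apply: ltnW; apply: (sorted_ltn_nth ltn_trans 0 ss) => //; rewrite inE //.
exact: ltn_trans qs.
Qed.

Lemma sorted_lt s p q : sorted ltn s -> p < q -> q < size s -> nth 0 s p < nth 0 s q.
Proof.
move=> ss pq qs; apply: (sorted_ltn_nth ltn_trans 0 ss) => //; rewrite inE //.
exact: ltn_trans qs.
Qed.

Lemma sF_head n F : nz F -> (inord 1 : 'I_n.+1) \in F -> 0 < n -> nth 0 (sF n F) 0 = 1.
Proof.
move=> h h1 n0; have : 1 \in sF n F by rewrite sF_mem h1 n0.
move=> m1; have ss := sF_sorted F; have hp := sF_pos F.
move: m1 ss hp; case: (sF n F) => // a s; rewrite inE /= => /orP [/eqP -> //|m1] ss /andP [a0 _].
have /allP := order_path_min ltn_trans ss => /(_ 1 m1); lia.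
Qed.

Lemma sF_nth_mem n F p : p < size (sF n F) ->
  [/\ 0 < nth 0 (sF n F) p, nth 0 (sF n F) p <= n & nth 0 (sF n F) p \in sF n F].
Proof.
move=> hp; have hm := mem_nth 0 hp.
have := hm; rewrite sF_mem => /andP [/andP [h1 h2] h3]; split => //. by rewrite h1 h2 h3.
Qed.

Lemma gap n F m : 0 < n -> nz F -> (inord 1 : 'I_n.+1) \in F ->
  (forall x, x \in F -> nat_of_ord x <= m) ->
  (forall t m', (inord 1 : 'I_n.+1) \in Rot n t F ->
      (forall x, x \in Rot n t F -> nat_of_ord x <= m') -> m <= m') ->
  forall i, i.+1 < size (sF n F) ->
  nth 0 (sF n F) i.+1 - nth 0 (sF n F) i <= n + 1 - nth 0 (sF n F) (size (sF n F)).-1.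
Proof.
move=> n0 h h1 hm hmin i hi.
have ss := sF_sorted F.
have [a0 an am] := sF_nth_mem (ltnW hi).
have [b0 bn bm] := sF_nth_mem hi.
have hL : (size (sF n F)).-1 < size (sF n F) by rewrite prednK //; lia.
have [L0 Ln Lm] := sF_nth_mem hL.
have hab : nth 0 (sF n F) i < nth 0 (sF n F) i.+1 by apply: sorted_lt.
have Lm' : nth 0 (sF n F) (size (sF n F)).-1 <= m.
  have := hm (inord (nth 0 (sF n F) (size (sF n F)).-1)); rewrite inordK //; apply.
  by move: Lm; rewrite sF_mem => /andP [_].
set s := sF n F in hi ss a0 an am b0 bn bm hL L0 Ln Lm hab Lm' *.
set a := nth 0 s i in a0 an am hab *.
set b := nth 0 s i.+1 in b0 bn bm hab *.
set L := nth 0 s (size s).-1 in L0 Ln Lm Lm' *.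
rewrite leqNgt; apply/negP => hgap.
have : m <= a + n + 1 - b.
  apply: (hmin (n + 1 - b)).
  - rewrite (sF_toset h) -/s.
    have -> : (inord 1 : 'I_n.+1) = inord (rv n (b + (n + 1 - b))).
      congr inord; rewrite (@rv_eq n _ 1) ?rv_id //.
      have -> : b + (n + 1 - b) = 1 + n by lia.
      by rewrite modnDr.
    exact: Rot_mem.
  - move=> x; rewrite {1}(sF_toset h) => /imsetP [j]; rewrite inE => js ->.
    rewrite val_inord_rv //.
    set y := nat_of_ord j in js *.
    have hp : index y s < size s by rewrite index_mem.
    have [y0 yn _] := sF_nth_mem hp; rewrite nth_index // in y0 yn.
    case: (leqP b y) => hy.
    + rewrite (@rv_eq n _ (y + 1 - b)) ?rv_id; [lia | lia |].
      have -> : y + (n + 1 - b) = (y + 1 - b) + n by lia.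
      by rewrite modnDr.
    + have hpi : index y s <= i.
        rewrite leqNgt; apply/negP => hip.
        have := sorted_le ss hip hp; rewrite nth_index // -/b; lia.
      have := sorted_le ss hpi (ltnW hi); rewrite nth_index // -/a => hya.
      rewrite rv_id; lia.
lia.
Qed.

Definition cF (s : seq nat) : seq nat :=
  [seq nth 0 s j.+1 - nth 0 s j | j <- iota 0 (size s).-1].

Lemma cF_size s : size (cF s) = (size s).-1.
Proof. by rewrite size_map size_iota. Qed.

Lemma cF_nth s j : j < (size s).-1 -> nth 0 (cF s) j = nth 0 s j.+1 - nth 0 s j.
Proof. by move=> hj; rewrite (nth_map 0) ?size_iota // nth_iota. Qed.

Lemma cF_take s i : sorted ltn s -> nth 0 s 0 = 1 -> i < size s ->
  sumn (take i (cF s)) = nth 0 s i - 1.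
Proof.
move=> ss h0; elim: i => [|i IH] hi; first by rewrite take0 h0.
have hi' : i < (size s).-1 by lia.
rewrite (take_nth 0) ?cF_size // sumn_rcons IH ?(ltnW hi) // cF_nth //.
have := sorted_lt ss (ltnSn i) hi.
have := sorted_le ss (leq0n i) (ltnW hi); rewrite h0; lia.
Qed.

Lemma Pk_cF s : sorted ltn s -> nth 0 s 0 = 1 -> Pk (size s) (cF s) = s.
Proof.
move=> ss h0; apply: (@eq_from_nth _ 0); first by rewrite Pk_size.
rewrite Pk_size => i hi; rewrite nth_mkseq // cF_take //.
have := sorted_le ss (leq0n i) hi; rewrite h0; lia.
Qed.

Lemma sumn_le_mul c d : all (fun x => x <= d) c -> sumn c <= size c * d.
Proof. by elim: c => //= x c IH /andP [xd /IH]; rewrite mulSn; lia. Qed.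

Lemma sig_bound n k sig : 2 <= k -> sig < n -> sig <= k.-1 * (n - sig) ->
  sig <= n - (n + k.-1) %/ k.
Proof.
move=> k2 hs h.
have : (n + k.-1) %/ k < (n - sig).+1.
  rewrite ltn_divLR; last lia.
  rewrite mulSn; move: h; set X := n - sig.
  have -> : k.-1 * X = k * X - X by rewrite -subn1 mulnBl mul1n.
  have : X <= k * X by rewrite leq_pmull; lia.
  rewrite mulnC; lia.
lia.
Qed.

Lemma cover_hyp n k E : prime n -> 2 <= k -> k < n -> hyperedge n k E ->
  exists g, inGtot n k g /\ E \in Cset n g.
Proof.
move=> pn k2 kn /andP [/eqP cE hE]; have n0 := prime_gt0 pn.
have E0 : E != set0 by rewrite -cards_eq0 cE; lia.
have [F [m [FE F1 Fm Fmin]]] := minrot n0 hE E0.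
have [hF cF_] := Orb_prop n0 hE FE.
have ss := sF_sorted F.
have sz : size (sF n F) = k by rewrite sF_size // cF_ cE.
have h0 := sF_head hF F1 n0.
set s := sF n F in ss sz h0.
have hgap := gap n0 hF F1 Fm Fmin; rewrite -/s sz in hgap.
set c := cF s.
have sc : size c = k.-1 by rewrite cF_size sz.
have hL : k.-1 < size s by rewrite sz; lia.
have [L0 Ln _] := sF_nth_mem hL; rewrite -/s in L0 Ln.
have hsig : sumn c = nth 0 s k.-1 - 1.
  by rewrite -cF_take // -/c take_oversize // sc.
have cpos : all (fun x => 0 < x) c.
  apply/allP => y /(nthP 0) [j hj hy]; rewrite -hy cF_nth; last by rewrite -cF_size.
  move: hj; rewrite sc => hj.
  have := sorted_lt ss (ltnSn j); rewrite sz; move/(_ ltac:(lia)); lia.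
have cle : all (fun x => x <= n - sumn c) c.
  apply/allP => y /(nthP 0) [j hj hy]; rewrite -hy cF_nth; last by rewrite -cF_size.
  rewrite hsig; move: hj; rewrite sc => hj; have := hgap j ltac:(lia); lia.
have hs : sumn c < n by rewrite hsig; lia.
exists (rcons [seq Posz x | x <- c]
          (if sumn c <= n %/ 2 then (- Posz (sumn c))%R else Posz (n - sumn c)%N)).
split.
- exists (sumn c); split.
  + by rewrite -sc; apply: sumn_ge_size.
  + apply: sig_bound => //; rewrite -sc; exact: sumn_le_mul.
  + exists c; split => //.
    by apply/allP => x xc; rewrite (allP cpos x xc) (allP cle x xc).
- rewrite (@Cset_Orb n k c _ n0 _ sc hs); last lia.
  rewrite -sz Pk_cF // /s -(sF_toset hF).
  by rewrite (Orb_eq n0 hE FE) Orb_self.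
Qed.

Lemma card_hyper n k : #|hyperedges n k| = 'C(n, k).
Proof.
have -> : hyperedges n k =
  (fun S : {set 'I_n} => (@lift n.+1 ord0) @: S) @: [set S : {set 'I_n} | #|S| == k].
  apply/setP => E; rewrite inE; apply/idP/imsetP.
  - case/andP => /eqP cE /forall_inP hE.
    have eE : (@lift n.+1 ord0) @: ((@lift n.+1 ord0) @^-1: E) = E.
      apply/setP => i; apply/imsetP/idP.
      + by case=> j; rewrite inE => hj ->.
      + move=> hi; case: (unliftP ord0 i) => [j eqj|eq0].
          by exists j; rewrite // inE -eqj.
        by move: (hE i hi); rewrite eq0.
    exists ((@lift n.+1 ord0) @^-1: E) => //.
    by rewrite inE -cE -{2}eE card_imset //; exact: lift_inj.
  - case=> S; rewrite inE => /eqP cS ->; rewrite /hyperedge.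
    rewrite card_imset ?cS ?eqxx /=; last exact: lift_inj.
    by apply/forall_inP => i /imsetP [j _ ->]; rewrite lift0.
rewrite card_imset; last exact: imset_inj lift_inj.
by rewrite card_draws card_ord.
Qed.

Lemma Cset_hyper n k g : prime n -> 2 <= k -> inGtot n k g ->
  exists B, hyperedge n k B /\ Cset n g = Orb n B.
Proof.
move=> pn k2 hg; have n0 := prime_gt0 pn; have k0 : 0 < k by lia.
have [c [m [-> sc hc hs]]] := Gtot_inv n0 k0 hg.
exists (toset n (Pk k c)); split; first exact: Bset_hyper.
exact: Cset_Orb.
Qed.

Lemma hyper_nz n k E : hyperedge n k E -> nz E.
Proof. by case/andP. Qed.

Lemma hyper_card n k E : hyperedge n k E -> #|E| = k.
Proof. by case/andP => /eqP. Qed.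

Lemma Orb_hyper n k B E : 0 < n -> hyperedge n k B -> E \in Orb n B -> hyperedge n k E.
Proof.
move=> n0 hB hE; have [h1 h2] := Orb_prop n0 (hyper_nz hB) hE.
by rewrite /hyperedge h2 (hyper_card hB) eqxx.
Qed.

Lemma Gtot_full n k g : prime n -> 2 <= k -> k < n -> inGtot n k g ->
  ham_cycle n k (cyc_vs n g) (cyc_Es n g) /\ [set E | E \in cyc_Es n g] = Cset n g.
Proof.
move=> pn k2 kn hg; have n0 := prime_gt0 pn; have k0 : 0 < k by lia.
have [c [m [-> sc hc hs]]] := Gtot_inv n0 k0 hg.
case: c sc hc hs => [|c0 c] sc hc hs; first by move: sc => /=; lia.
split; [exact: (@ham_ok n k c0 c m pn k2 kn sc hc hs) | exact: (@Es_Cset n k c0 c m pn k2 kn sc hc hs)].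
Qed.

Unset Implicit Arguments.

Theorem theorem1 (n k : nat) :
  prime n -> 2 <= k -> 2 * k < n ->
  ( (exists Fam : {set {set {set 'I_n.+1}}},
        (forall X, X \in Fam <-> exists g, inGtot n k g /\ X = Cset n g) /\
        #|Fam| = 'C(n, k) %/ n)
    /\ (forall g g', inGtot n k g -> inGtot n k g' ->
          Cset n g = Cset n g' \/ [disjoint Cset n g & Cset n g'])
    /\ (forall E : {set 'I_n.+1},
          E \in hyperedges n k <-> exists g, inGtot n k g /\ E \in Cset n g) )
  /\ (forall gs : 'I_('C(n, k) %/ n) -> seq int,
        (forall i, inGtot n k (gs i)) ->
        (forall i j, i != j -> Cset n (gs i) != Cset n (gs j)) ->
        (forall i, ham_cycle n k (cyc_vs n (gs i)) (cyc_Es n (gs i)))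
        /\ (forall i j, i != j ->
              [disjoint [set E | E \in cyc_Es n (gs i)] & [set E | E \in cyc_Es n (gs j)]])
        /\ (forall E, E \in hyperedges n k -> exists i, E \in cyc_Es n (gs i))).
Proof.
move=> pn k2 hk; have n0 := prime_gt0 pn; have kn : k < n by lia.
pose Fam := [set Orb n E | E in hyperedges n k].
have FamP : forall X, X \in Fam <-> exists g, inGtot n k g /\ X = Cset n g.
  move=> X; split.
  - case/imsetP => E; rewrite inE => hE ->.
    have [g [hg Eg]] := cover_hyp pn k2 kn hE.
    exists g; split => //.
    have [B [hB eB]] := Cset_hyper pn k2 hg.
    by rewrite eB; apply: Orb_eq => //; [exact: hyper_nz hB | rewrite -eB].
  - case=> g [hg ->]; have [B [hB ->]] := Cset_hyper pn k2 hg.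
    by apply: imset_f; rewrite inE.
have Famcard : #|Fam| = 'C(n, k) %/ n.
  have triv : trivIset Fam.
    apply/trivIsetP => A B /imsetP [E hE ->] /imsetP [E' hE' ->] ne.
    rewrite !inE in hE hE'.
    case: (Orb_disj n0 (hyper_nz hE) (hyper_nz hE')) => // eq.
    by rewrite eq eqxx in ne.
  have cov : cover Fam = hyperedges n k.
    apply/setP => E; apply/bigcupP/idP.
    - case=> X /imsetP [B hB ->] hEX; rewrite inE in hB *.
      by rewrite inE; exact: Orb_hyper n0 hB hEX.
    - move=> hE; exists (Orb n E); first exact: imset_f.
      rewrite inE in hE; exact: Orb_self (hyper_nz hE).
  move/eqP: triv; rewrite cov card_hyper.
  rewrite (eq_bigr (fun _ => n)); last first.
    move=> X /imsetP [E hE ->]; rewrite inE in hE.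
    by rewrite (Orb_card pn (hyper_nz hE)) // (hyper_card hE); lia.
  by rewrite sum_nat_const => <-; rewrite mulnK.
have disj : forall g g', inGtot n k g -> inGtot n k g' ->
          Cset n g = Cset n g' \/ [disjoint Cset n g & Cset n g'].
  move=> g g' hg hg'.
  have [B [hB ->]] := Cset_hyper pn k2 hg.
  have [B' [hB' ->]] := Cset_hyper pn k2 hg'.
  exact: Orb_disj (hyper_nz hB) (hyper_nz hB').
have hyp : forall E : {set 'I_n.+1},
          E \in hyperedges n k <-> exists g, inGtot n k g /\ E \in Cset n g.
  move=> E; split.
  - by rewrite inE; apply: cover_hyp.
  - case=> g [hg]; have [B [hB ->]] := Cset_hyper pn k2 hg.
    by move=> hE; rewrite inE; apply: Orb_hyper n0 hB hE.
split; first by split; [exists Fam; split | split].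
move=> gs hgs hdist.
have full := fun i => Gtot_full pn k2 kn (hgs i).
split; first by move=> i; case: (full i).
split.
- move=> i j ne; rewrite (proj2 (full i)) (proj2 (full j)).
  case: (disj _ _ (hgs i) (hgs j)) => // eq.
  by move: (hdist i j ne); rewrite eq eqxx.
- move=> E hE.
  have [g [hg Eg]] := (proj1 (hyp E)) hE.
  pose Im := [set Cset n (gs i) | i : 'I_('C(n, k) %/ n)].
  have ImF : Im = Fam.
    apply/eqP; rewrite eqEcard; apply/andP; split.
    + apply/subsetP => X /imsetP [i _ ->]; apply/(FamP _); exists (gs i); split => //.
    + rewrite Famcard card_imset ?card_ord //.
      move=> i j e; apply/eqP; apply/negPn/negP => ne.
      by move: (hdist i j ne); rewrite e eqxx.
  have : Cset n g \in Im by rewrite ImF; apply/(FamP _); exists g.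
  case/imsetP => i _ eqi; exists i.
  by move: Eg; rewrite eqi -(proj2 (full i)) inE.
Qed.
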